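(* Let $d,k$ be positive integers and $z_1,\dots,z_d$ integers. For $1\le i\le d$ let $A_i=\{z_i+1,\dots,z_i+k\}$ and $B_i=\{z_i+1,\dots,z_i+k-1\}$ (with $B_i=\varnothing$ if $k=1$). Let $U\subseteq\mathbb{R}^d$ satisfy: (1) $U$ is non-empty; (2) $U$ is convex; (3) for each $1\le i\le d$, $\pi_i(U)=\pi_i(H^i_{z_i+1}\cap U)$, where $\pi_i:\mathbb{R}^d\to\mathbb{R}^{d-1}$ deletes the $i$-th coordinate and $H^i_x\subseteq\mathbb{R}^d$ is the hyperplane $\{x_i=x\}$. Then $$(k-1)^d\Big|U\cap\prod_{i=1}^d A_i\Big|\le k^d\Big|U\cap\prod_{i=1}^d B_i\Big|.$$ *)

(* Defs.v *)
From HB Require Import structures.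
From mathcomp Require Import all_boot all_order all_algebra.
From mathcomp Require Import boolp classical_sets reals.
Set Implicit Arguments. Unset Strict Implicit. Unset Printing Implicit Defensive.
Import Order.TTheory GRing.Theory Num.Theory.
Local Open Scope ring_scope.
Local Open Scope classical_set_scope.

(* Points of R^d are row vectors 'rV[R]_d; coordinate i of x is x 0 i. *)

Definition convex_rv (R : realType) (d : nat) (U : set 'rV[R]_d) : Prop :=
  forall x y : 'rV[R]_d, U x -> U y ->
    forall t : R, 0 <= t -> t <= 1 -> U (t *: x + (1 - t) *: y).

Definition proj_del (R : realType) (d : nat) (i : 'I_d) (x : 'rV[R]_d)
  : 'rV[R]_d.-1 := \row_(j < d.-1) x 0 (lift i j).

Definition hyperplane (R : realType) (d : nat) (i : 'I_d) (c : R)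
  : set 'rV[R]_d := [set x | x 0 i = c].

(* The integer point (z_i + 1 + t_i)_i, for an offset vector t.  As t ranges
   over {ffun 'I_d -> 'I_m}, this enumerates bijectively the integer box
   prod_i {z_i+1, ..., z_i+m}. *)
Definition box_pt (R : realType) (d m : nat) (z : 'I_d -> int)
  (t : {ffun 'I_d -> 'I_m}) : 'rV[R]_d :=
  \row_(i < d) ((z i + 1 + (t i : nat)%:Z)%:~R).

Definition box_count (R : realType) (d m : nat) (z : 'I_d -> int)
  (U : set 'rV[R]_d) : nat :=
  #|[set t : {ffun 'I_d -> 'I_m} | `[< U (box_pt R z t) >] ]|.

(* Main.v *)
Require Import Defs.
From HB Require Import structures.
From mathcomp Require Import all_boot all_order all_algebra.
From mathcomp Require Import boolp classical_sets reals.
From mathcomp Require Import ring lra zify.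
Import Order.TTheory GRing.Theory Num.Theory.
Local Open Scope ring_scope.
Local Open Scope classical_set_scope.

Lemma L1 (R : realType) (d : nat) (U : set 'rV[R]_d) (i : 'I_d) (b : R)
  (hconv : convex_rv U)
  (hpi : proj_del i @` U = proj_del i @` (hyperplane i b `&` U))
  (x : 'rV[R]_d) (c : R) :
  U x -> b <= c -> c <= x 0 i -> U (\row_j (if j == i then c else x 0 j)).
Proof.
move=> Ux bc cx.
have : (proj_del i @` U) (proj_del i x) by exists x.
rewrite hpi => -[y [/= yi Uy] pyx].
have yj : forall j, j != i -> y 0 j = x 0 j.
  move=> j; rewrite eq_sym => /unlift_some [j' -> _].
  by have := congr1 (fun v : 'rV[R]_d.-1 => v 0 j') pyx; rewrite /proj_del !mxE.
have [xb|xb] := eqVneq (x 0 i) b.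
  have -> : \row_j (if j == i then c else x 0 j) = x; last by [].
  apply/rowP => j; rewrite mxE; case: eqP => // ->.
  by apply/le_anti; rewrite cx /= xb.
have xbp : 0 < x 0 i - b.
  rewrite subr_gt0 lt_def xb /=; exact: le_trans bc cx.
set t := (c - b) / (x 0 i - b).
have t0 : 0 <= t by apply: divr_ge0; [rewrite subr_ge0 | exact: ltW].
have t1 : t <= 1 by rewrite /t ler_pdivrMr // mul1r lerD2r.
have := hconv x y Ux Uy t t0 t1.
congr U; apply/rowP => j; rewrite !mxE.
case: eqP => [->|/eqP jn].
  rewrite yi /t; field; by rewrite gt_eqF.
rewrite yj //; ring.
Qed.

Arguments L1 {R d U i b} hconv hpi {x c}.

Lemma L2 (R : realType) (d : nat) (U : set 'rV[R]_d) (b : 'I_d -> R)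
  (hconv : convex_rv U)
  (hp : forall i : 'I_d, proj_del i @` U = proj_del i @` (hyperplane i (b i) `&` U))
  (x y : 'rV[R]_d) :
  U x -> (forall i, b i <= y 0 i /\ y 0 i <= x 0 i) -> U y.
Proof.
move=> Ux hy.
pose w n := \row_(j < d) (if (j < n)%N then y 0 j else x 0 j).
have Uw : forall n, U (w n).
  elim=> [|n IH].
    by have -> : w 0%N = x by apply/rowP => j; rewrite mxE.
  case: (ltnP n d) => nd.
    set i := Ordinal nd.
    have := L1 hconv (hp i) IH (proj1 (hy i)).
    have e : w n 0 i = x 0 i by rewrite mxE ltnn.
    rewrite e => /(_ (proj2 (hy i))).
    congr U; apply/rowP => j; rewrite !mxE ltnS.
    case: (eqVneq j i) => [->|ji]; first by rewrite /= leqnn.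
    rewrite [(j <= n)%N]leq_eqVlt.
    have -> : (val j == n) = false.
      by apply/negbTE; apply: contra ji => /eqP jn; apply/eqP/val_inj.
    by [].
  have -> : w n.+1 = w n; last by [].
  apply/rowP => j; rewrite !mxE.
  have jn : (j < n)%N by apply: leq_trans (ltn_ord j) nd.
  by rewrite jn (leq_trans jn).
by have -> : y = w d by apply/rowP => j; rewrite mxE ltn_ord.
Qed.

Arguments L2 {R d U b} hconv hp {x y}.

Definition g {n : nat} (x : 'I_n.+1) (a : 'I_n) : 'I_n * 'I_n.+1 :=
  match insub (val x) with
  | Some y => (y, widen_ord (leqnSn n) a)
  | None => (a, ord_max)
  end.

Lemma g_inj n (x x' : 'I_n.+1) (a a' : 'I_n) : @g n x a = @g n x' a' -> x = x' /\ a = a'.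
Proof.
rewrite /g; case: insubP => [y xn yx|xn]; case: insubP => [y' xn' yx'|xn'] //=.
- case=> e1 e2; split; first by apply/val_inj; rewrite -yx -yx' e1.
  exact: val_inj.
- case=> _ e; by move: (ltn_ord a); rewrite e ltnn.
- case=> _ e; by move: (ltn_ord a'); rewrite -e ltnn.
- case=> e; split; last exact: e.
  apply/val_inj.
  have h1 := ltn_ord x; have h2 := ltn_ord x'.
  move: xn xn'; rewrite -!leqNgt /= => h3 h4; move: h1 h2 h3 h4.
  move: (nat_of_ord x) (nat_of_ord x') => u v; lia.
Qed.

Lemma g_le n (x : 'I_n.+1) (a : 'I_n) : (val (@g n x a).1 <= val x)%N.
Proof.
rewrite /g; case: insubP => [y _ yx|xn] /=; first by rewrite yx.
rewrite -leqNgt in xn; exact: leq_trans (ltnW (ltn_ord a)) xn.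
Qed.

Lemma bcE (R : realType) d m z (U : set 'rV[R]_d) :
  box_count m z U = #|[set t : {ffun 'I_d -> 'I_m} | `[< U (box_pt R z t) >]]%SET|.
Proof.
rewrite /box_count; apply: eq_card => t; rewrite [in RHS]inE.
by apply/idP/idP => h; [move/set_mem: h | apply/mem_set].
Qed.

Theorem lemma2p4 (R : realType) (d k : nat) (hd : (0 < d)%N) (hk : (0 < k)%N)
  (z : 'I_d -> int) (U : set 'rV[R]_d)
  (hne : U !=set0)
  (hconv : convex_rv U)
  (hproj : forall i : 'I_d,
     proj_del i @` U = proj_del i @` (hyperplane i ((z i + 1)%:~R) `&` U)) :
  ((k.-1) ^ d * box_count k z U <= k ^ d * box_count k.-1 z U)%N.
Proof.
case: k hk => // n _ /=.
rewrite !bcE.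
set SA := [set t : {ffun 'I_d -> 'I_n.+1} | `[< U (box_pt R z t) >] ]%SET.
set SB := [set t : {ffun 'I_d -> 'I_n} | `[< U (box_pt R z t) >] ]%SET.
pose F (p : {ffun 'I_d -> 'I_n.+1} * {ffun 'I_d -> 'I_n}) :=
  ([ffun i => (g (p.1 i) (p.2 i)).1], [ffun i => (g (p.1 i) (p.2 i)).2]).
have Finj : injective F.
  move=> [t a] [t' a'] [e1 e2].
  have h : forall i, t i = t' i /\ a i = a' i.
    move=> i; apply: g_inj.
    have := congr1 (fun f : {ffun 'I_d -> 'I_n} => f i) e1.
    have := congr1 (fun f : {ffun 'I_d -> 'I_n.+1} => f i) e2.
    rewrite !ffunE /= => q1 q2; by rewrite [g _ _]surjective_pairing q1 q2 -surjective_pairing.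
  by congr pair; apply/ffunP => i; case: (h i).
have : (#|(F @: finset.setX SA [set: {ffun 'I_d -> 'I_n}])%SET| <= #|(finset.setX SB [set: {ffun 'I_d -> 'I_n.+1}])%SET|)%N.
  apply: subset_leq_card; apply/fintype.subsetP => q /imsetP [[t a]].
  rewrite inE /= => /andP [tA _] ->.
  rewrite !inE /= ssrbool.andbT; apply/asboolP.
  move: tA; rewrite inE => /asboolP Ut.
  apply: (L2 (b := fun i => (z i + 1)%:~R) hconv hproj Ut) => i; rewrite /box_pt !mxE ffunE; split.
    by rewrite ler_int lerDl.
  by rewrite ler_int lerD2l lez_nat g_le.
rewrite card_imset // !cardsX !cardsT !card_ffun !card_ord.
by rewrite [(n ^ d * _)%N]mulnC [(n.+1 ^ d * _)%N]mulnC.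
Qed.
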